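(* For every permutation $\sigma$ and every Cayley permutation $y$, $$\mathcal{S}(\sigma)=\gamma\bigl(X[\sigma^{-1}]\bigr)\qquad\text{and}\qquad\gamma\bigl(X[y]\bigr)=\mathcal{S}\bigl(\gamma(y)\bigr).$$
   Context: A Cayley permutation of length $n$ is a word of positive integers in which every integer from $1$ to its maximum occurs. Containment $y\le x$: indices $i_1<\dots<i_k$ ($k$ the length of $y$) with $x(i_s)<x(i_t)\iff y(s)<y(t)$ and $x(i_s)=x(i_t)\iff y(s)=y(t)$; otherwise $x$ avoids $y$. $\mathcal{S}$ is the set of permutations, $\mathcal{S}(\tau)$ those avoiding $\tau$. For $x$ of length $n$, $\gamma(x)$ is the permutation obtained by sorting the pairs $(x(i),i)$ increasingly by first coordinate, ties by decreasing second coordinate, and reading the second coordinates; $\gamma(E)=\{\gamma(x):x\in E\}$. $x\sim y$ iff $\gamma(x)=\gamma(y)$, $[y]$ is the class of $y$, and $E[y]$ is the set of elements of $E$ avoiding every element of $[y]$. The map $\eta$: for $\pi\in\mathcal{S}_n$ and $i\in[n]$, let $J(i)=0$ if $\pi(i)=1$ and otherwise let $J(i)$ be the index with $\pi(J(i))=\pi(i)-1$. The sites of $\pi$ are the site before $\pi(1)$ and the site after $\pi(i)$ for each $i\in[n]$. The site before $\pi(1)$ is $\eta$-active; the site after $\pi(i)$ is $\eta$-active iff $J(i)<i$, or $i<n$ and $\pi(i)<\pi(i+1)$. Define $\tilde\upsilon(\pi)(j)$ to be the number of $\eta$-active sites to the left of $\pi(j)$ (so consecutive active sites are numbered $1,2,\dots$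 and entries between active sites $k$ and $k+1$ get label $k$). Then $\eta(\pi)$ is the word of length $n$ with $\eta(\pi)(\pi(j))=\tilde\upsilon(\pi)(j)$ for all $j$, i.e. $\eta(\pi)=\tilde\upsilon(\pi)\circ\pi^{-1}$. Let $X=\eta(\mathcal{S})$. *)

(* Defs.v *)
From mathcomp Require Import all_boot.
Set Implicit Arguments. Unset Strict Implicit. Unset Printing Implicit Defensive.

(* Words are seq nat; position i (1-based) of x is nth 0 x (i-1). *)

Definition is_cayley (x : seq nat) : bool :=
  all (fun v => 0 < v) x && all (fun k => k \in x) (iota 1 (foldr maxn 0 x)).

Definition is_perm (x : seq nat) : bool := is_cayley x && uniq x.

Definition order_iso (z y : seq nat) : bool :=
  (size z == size y) &&
  [forall s : 'I_(size y), forall t : 'I_(size y),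
     ((nth 0 z s < nth 0 z t) == (nth 0 y s < nth 0 y t)) &&
     ((nth 0 z s == nth 0 z t) == (nth 0 y s == nth 0 y t))].

Definition contains (x y : seq nat) : Prop :=
  exists z : seq nat, subseq z x /\ order_iso z y.
Definition avoids (x y : seq nat) : Prop := ~ contains x y.

Definition Sav (tau : seq nat) (p : seq nat) : Prop := is_perm p /\ avoids p tau.

Definition gamma_le (a b : nat * nat) : bool :=
  (a.1 < b.1) || ((a.1 == b.1) && (b.2 <= a.2)).
Definition gamma (x : seq nat) : seq nat :=
  map snd (sort gamma_le (zip x (iota 1 (size x)))).

Definition perm_inv (s : seq nat) : seq nat :=
  [seq (index v s).+1 | v <- iota 1 (size s)].

Section Eta.
Variable p : seq nat.
Let n := size p.
Let pi (i : nat) := nth 0 p i.-1.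
Definition etaJ (i : nat) : nat :=
  if pi i == 1 then 0 else (index (pi i).-1 p).+1.
(* the site after pi(i) is eta-active *)
Definition eta_active (i : nat) : bool :=
  (etaJ i < i) || ((i < n) && (pi i < pi i.+1)).
(* number of eta-active sites to the left of pi(j): the site before pi(1)
   plus the active sites after pi(i), 1 <= i < j *)
Definition upsilon (j : nat) : nat := 1 + count eta_active (iota 1 j.-1).
Definition eta : seq nat := [seq upsilon (index v p).+1 | v <- iota 1 n].
End Eta.

Definition inX (w : seq nat) : Prop := exists p, is_perm p /\ eta p = w.

(* E[y] for E = X: elements of X avoiding every element of the class [y]
   (Cayley permutations x with gamma x = gamma y). *)
Definition Xbr (y : seq nat) (w : seq nat) : Prop :=
  inX w /\ forall x, is_cayley x -> gamma x = gamma y -> avoids w x.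

Definition gamma_img (E : seq nat -> Prop) (p : seq nat) : Prop :=
  exists w, E w /\ gamma w = p.

(* Main.v *)
Require Import Defs.
From mathcomp Require Import all_boot.
From mathcomp Require Import zify.
From Stdlib Require Import FunctionalExtensionality.
Set Implicit Arguments. Unset Strict Implicit. Unset Printing Implicit Defensive.

Definition Rw (w : seq nat) : rel nat := fun i j =>
  (nth 0 w i < nth 0 w j) || ((nth 0 w i == nth 0 w j) && (j <= i)).

Lemma gammaE w : gamma w = map S (sort (Rw w) (iota 0 (size w))).
Proof.
rewrite /gamma.
have -> : zip w (iota 1 (size w)) = map (fun i => (nth 0 w i, i.+1)) (iota 0 (size w)).
  apply: (@eq_from_nth _ (0,0)); first by rewrite size_zip !size_map !size_iota minnn.
  move=> i; rewrite size_zip size_iota minnn => Hi.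
  by rewrite nth_zip ?size_iota // (nth_map 0) ?size_iota // !nth_iota.
rewrite sort_map -map_comp; done.
Qed.

Lemma Rw_total w : total (Rw w).
Proof. move=> i j; rewrite /Rw; lia. Qed.
Lemma Rw_trans w : transitive (Rw w).
Proof. move=> j i k; rewrite /Rw; case/orP=> [H1|/andP[/eqP H1 H2]]; case/orP=> [H3|/andP[/eqP H3 H4]]; apply/orP.
- by left; lia.
- by left; lia.
- by left; lia.
- by right; apply/andP; split; [apply/eqP; lia | lia].
Qed.
Lemma Rw_anti w : antisymmetric (Rw w).
Proof. move=> i j; rewrite /Rw => /andP[]; case/orP=> [H1|/andP[/eqP H1 H2]]; case/orP=> [H3|/andP[/eqP H3 H4]]; lia. Qed.

Lemma eq_in_sort (T : Type) (P : pred T) (R1 R2 : rel T) s :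
  all P s -> {in P &, R1 =2 R2} -> sort R1 s = sort R2 s.
Proof.
move=> /all_sigP[s' ->] h; rewrite !sort_map; congr map.
f_equal. apply: functional_extensionality => x; apply: functional_extensionality => y.
by rewrite /relpre /= h //; apply: valP.
Qed.

Lemma foldr_maxn_le s n : all (fun v => v <= n) s -> foldr maxn 0 s <= n.
Proof. elim: s => //= a s IH /andP[Ha Hs]; by rewrite geq_max Ha IH. Qed.

Lemma foldr_maxn_ge s v : v \in s -> v <= foldr maxn 0 s.
Proof. elim: s => //= a s IH; rewrite in_cons => /orP[/eqP->|/IH H]; rewrite leq_max ?leqnn ?H ?orbT //. Qed.

Lemma perm_iota_is_perm s n : perm_eq s (iota 1 n) -> is_perm s.
Proof.
move=> Hp; rewrite /is_perm /is_cayley (perm_uniq Hp) iota_uniq andbT.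
apply/andP; split.
  apply/allP => v; rewrite (perm_mem Hp) mem_iota; lia.
apply/allP => k; rewrite mem_iota (perm_mem Hp) mem_iota => /andP[H1 H2].
have: foldr maxn 0 s <= n.
  apply: foldr_maxn_le; apply/allP => v; rewrite (perm_mem Hp) mem_iota; lia.
lia.
Qed.

Lemma is_perm_iota s : is_perm s -> perm_eq s (iota 1 (size s)).
Proof.
case/andP=> /andP[/allP Hpos /allP Hall] Hu.
set M := foldr maxn 0 s.
have P1 : perm_eq s (iota 1 M).
  apply: uniq_perm => //; first exact: iota_uniq.
  move=> v; apply/idP/idP => H.
    rewrite mem_iota; have := Hpos v H; have := foldr_maxn_ge H; rewrite -/M; lia.
  exact: Hall.
by rewrite (perm_size P1) size_iota.
Qed.

Lemma gamma_perm w : perm_eq (gamma w) (iota 1 (size w)).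
Proof.
rewrite gammaE (_ : iota 1 _ = map S (iota 0 (size w))); last first.
  by rewrite (iotaDl 1 0) ; apply: eq_map => x.
by apply: perm_map; rewrite perm_sort.
Qed.

Lemma gamma_is_perm w : is_perm (gamma w).
Proof. exact: perm_iota_is_perm (gamma_perm w). Qed.

Lemma size_gamma w : size (gamma w) = size w.
Proof. by rewrite (perm_size (gamma_perm w)) size_iota. Qed.

Lemma mem_gamma w v : (v \in gamma w) = (0 < v <= size w).
Proof. by rewrite (perm_mem (gamma_perm w)) mem_iota add1n ltnS. Qed.

Lemma sorted_ltn_nthE s i j : sorted ltn s -> i < size s -> j < size s ->
  (nth 0 s i < nth 0 s j) = (i < j).
Proof.
move=> Hs Hi Hj; have H := sorted_ltn_nth ltn_trans 0 Hs.
case: (ltngtP i j) => [Hij|Hij|->]; last by rewrite ltnn.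
  exact: H.
by apply/negbTE; rewrite -leqNgt ltnW //; apply: H.
Qed.

Lemma sorted_leq_nthE s i j : sorted ltn s -> i < size s -> j < size s ->
  (nth 0 s i <= nth 0 s j) = (i <= j).
Proof. by move=> Hs Hi Hj; rewrite leqNgt sorted_ltn_nthE // -leqNgt. Qed.

Definition isoP (z y : seq nat) : Prop := size z = size y /\
  forall s t, s < size y -> t < size y ->
    (nth 0 z s < nth 0 z t) = (nth 0 y s < nth 0 y t).

Lemma eq_from_lt a b c d : (a < b) = (c < d) -> (b < a) = (d < c) -> (a == b) = (c == d).
Proof. by move=> H1 H2; rewrite eqn_leq (eqn_leq c) (leqNgt a) (leqNgt b) (leqNgt c) (leqNgt d) H1 H2. Qed.

Lemma order_isoE z y : order_iso z y <-> isoP z y.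
Proof.
split.
  case/andP=> /eqP Hs /forallP H; split=> // s t Hs' Ht'.
  by have /forallP /(_ (Ordinal Ht')) /andP[/eqP -> _] := H (Ordinal Hs').
case=> Hs H; apply/andP; split; first by apply/eqP.
apply/forallP => s; apply/forallP => t; apply/andP; split; apply/eqP.
  exact: H.
by apply: eq_from_lt; apply: H.
Qed.

Lemma isoP_sym z y : isoP z y -> isoP y z.
Proof. case=> Hs H; split; first by []. move=> s t Hs1 Ht1; rewrite H // -Hs //. Qed.

Lemma isoP_trans z y x : isoP z y -> isoP y x -> isoP z x.
Proof. case=> Hs H [Hs' H'] ; split; first by rewrite Hs.
by move=> s t Hs1 Ht1; rewrite H ?Hs' // H'. Qed.

Lemma gamma_iso z x : isoP z x -> gamma z = gamma x.
Proof.
case=> Hs H; rewrite !gammaE Hs; congr map.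
apply: (@eq_in_sort _ (fun i => i < size x)).
  by apply/allP => i; rewrite mem_iota.
move=> i j Hi Hj; rewrite /Rw H // (eq_from_lt (H i j Hi Hj) (H j i Hj Hi)) //.
Qed.

Lemma iso_map h s t : {in s &, forall a b, (h a < h b) = (a < b)} ->
  isoP s t -> isoP (map h s) t.
Proof.
move=> Hh [Hs H]; split; first by rewrite size_map.
move=> a b Ha Hb; rewrite !(nth_map 0) ?Hs // Hh ?H //; apply: mem_nth; rewrite Hs //.
Qed.

Lemma iso_map_inv h s t : {in s &, forall a b, (h a < h b) = (a < b)} ->
  isoP (map h s) t -> isoP s t.
Proof.
move=> Hh [Hs H]; rewrite size_map in Hs; split=> //.
move=> a b Ha Hb; rewrite -H // !(nth_map 0) ?Hs // Hh //; apply: mem_nth; rewrite Hs //.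
Qed.

Lemma isoP_refl s : isoP s s.
Proof. by []. Qed.

Lemma gamma_mask w m : size m = size w ->
  filter (fun v => nth false m v.-1) (gamma w) =
  map (fun v => (nth 0 (mask m (iota 0 (size w))) v.-1).+1) (gamma (mask m w)).
Proof.
move=> Hm; set P := mask m (iota 0 (size w)).
have HP : P = filter (nth false m) (iota 0 (size w)).
  rewrite filter_mask; congr mask.
  by rewrite -{1}Hm; have := mkseq_nth false m; rewrite /mkseq.
have Hz : mask m w = map (nth 0 w) P.
  by rewrite map_mask; congr mask; have := mkseq_nth 0 w; rewrite /mkseq.
have HsP : sorted ltn P by apply: sorted_mask => //; [exact: ltn_trans | exact: iota_ltn_sorted].
set k := size P.
have Hk : size (mask m w) = k by rewrite Hz size_map.
rewrite !gammaE filter_map filter_sort; [|exact: Rw_total|exact: Rw_trans].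
have -> : [seq x <- iota 0 (size w) | preim S (fun v => nth false m v.-1) x] = P.
  by rewrite HP; apply: eq_filter.
have -> : sort (Rw w) P = map (nth 0 P) (sort (relpre (nth 0 P) (Rw w)) (iota 0 k)).
  by rewrite -sort_map; congr sort; have := mkseq_nth 0 P; rewrite /mkseq.
rewrite Hk -!map_comp.
rewrite (@eq_in_sort _ (fun i => i < k) _ (Rw (mask m w))); last first.
  move=> i j Hi Hj; rewrite /relpre /Rw Hz !(nth_map 0) //.
  by rewrite /= (sorted_leq_nthE HsP Hj Hi).
  by apply/allP => i; rewrite mem_iota.
by apply: eq_map.
Qed.

Lemma count_lt_iota a k : 0 < a <= k.+1 -> count (fun v => v < a) (iota 1 k) = a.-1.
Proof.
move=> Ha; rewrite (_ : k = a.-1 + (k - a.-1)); last lia.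
rewrite iotaD count_cat.
have -> : count (fun v => v < a) (iota 1 a.-1) = a.-1.
  rewrite (@eq_in_count _ _ predT) ?count_predT ?size_iota //.
  by move=> v; rewrite mem_iota /=; lia.
have -> : count (fun v => v < a) (iota (1 + a.-1) (k - a.-1)) = 0.
  rewrite (@eq_in_count _ _ pred0) ?count_pred0 //.
  by move=> v; rewrite mem_iota /=; lia.
by rewrite addn0.
Qed.

Lemma perm_rank r k i : perm_eq r (iota 1 k) -> i < k ->
  (nth 0 r i).-1 = count (fun j => nth 0 r j < nth 0 r i) (iota 0 k).
Proof.
move=> Hr Hi.
have Sr : size r = k by rewrite (perm_size Hr) size_iota.
have Hm : nth 0 r i \in iota 1 k by rewrite -(perm_mem Hr) mem_nth // Sr.
rewrite -(@count_lt_iota _ k); last by move: Hm; rewrite mem_iota; lia.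
move/permP: (Hr) => Hc; rewrite -Hc.
have Er : map (nth 0 r) (iota 0 k) = r by rewrite -Sr; have := mkseq_nth 0 r; rewrite /mkseq.
by rewrite -[X in count _ X = _]Er count_map.
Qed.

Lemma perm_iso_eq p q k : perm_eq p (iota 1 k) -> perm_eq q (iota 1 k) -> isoP p q -> p = q.
Proof.
move=> Hp Hq [Hs H].
have Sp : size p = k by rewrite (perm_size Hp) size_iota.
have Sq : size q = k by rewrite (perm_size Hq) size_iota.
apply: (@eq_from_nth _ 0); first by rewrite Sp Sq.
move=> i Hi; rewrite Sp in Hi.
have E1 := perm_rank Hp Hi; have E2 := perm_rank Hq Hi.
have : (nth 0 p i).-1 = (nth 0 q i).-1.
  rewrite E1 E2; apply: eq_in_count => j; rewrite mem_iota /= => Hj.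
  by rewrite H // Sq.
have P1 : 0 < nth 0 p i.
  have : nth 0 p i \in iota 1 k by rewrite -(perm_mem Hp) mem_nth // Sp.
  by rewrite mem_iota => /andP[].
have P2 : 0 < nth 0 q i.
  have : nth 0 q i \in iota 1 k by rewrite -(perm_mem Hq) mem_nth // Sq.
  by rewrite mem_iota => /andP[].
lia.
Qed.

Definition stdz (z : seq nat) := [seq (index v (sort leq (undup z))).+1 | v <- z].

Lemma sorted_u z : sorted ltn (sort leq (undup z)).
Proof. by rewrite ltn_sorted_uniq_leq sort_uniq undup_uniq sort_sorted //; exact: leq_total. Qed.

Lemma std_iso z : isoP (stdz z) z.
Proof.
apply: iso_map; last exact: isoP_refl.
move=> a b Ha Hb; rewrite ltnS.
have Ha' : a \in sort leq (undup z) by rewrite mem_sort mem_undup.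
have Hb' : b \in sort leq (undup z) by rewrite mem_sort mem_undup.
by rewrite -(sorted_ltn_nthE (sorted_u z)) ?index_mem // !nth_index.
Qed.

Lemma std_cayley z : is_cayley (stdz z).
Proof.
set u := sort leq (undup z).
apply/andP; split; first by apply/allP => v /mapP[a _ ->].
apply/allP => k; rewrite mem_iota => Hk.
have Hle : foldr maxn 0 (stdz z) <= size u.
  apply: foldr_maxn_le; apply/allP => v /mapP[a Ha ->].
  by rewrite index_mem /u mem_sort mem_undup.
have Hk' : k.-1 < size u by lia.
apply/mapP; exists (nth 0 u k.-1).
  by have := mem_nth 0 Hk'; rewrite /u mem_sort mem_undup.
rewrite index_uniq //; first lia.
by rewrite /u sort_uniq undup_uniq.
Qed.

Lemma h_mono w m : size m = size w ->
  {in gamma (mask m w) &, forall a b,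
    ((nth 0 (mask m (iota 0 (size w))) a.-1).+1 < (nth 0 (mask m (iota 0 (size w))) b.-1).+1) = (a < b)}.
Proof.
move=> Hm a b; rewrite !mem_gamma => Ha Hb.
have HsP : sorted ltn (mask m (iota 0 (size w))).
  by apply: sorted_mask => //; [exact: ltn_trans | exact: iota_ltn_sorted].
have Hs : size (mask m (iota 0 (size w))) = size (mask m w).
  by rewrite !size_mask ?size_iota.
rewrite ltnS sorted_ltn_nthE // ?Hs; lia.
Qed.

Lemma contains_gamma w x : contains w x -> contains (gamma w) (gamma x).
Proof.
case=> z [/subseqP [m Hm ->] /order_isoE Hiso].
rewrite -(gamma_iso Hiso).
exists (filter (fun v => nth false m v.-1) (gamma w)); split; first exact: filter_subseq.
apply/order_isoE; rewrite gamma_mask //; apply: iso_map; last exact: isoP_refl.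
exact: h_mono.
Qed.

Lemma gamma_contains w y : contains (gamma w) (gamma y) ->
  exists x, is_cayley x /\ gamma x = gamma y /\ contains w x.
Proof.
case=> u [Hsub /order_isoE Hiso].
have Hu : uniq (gamma w) by case/andP: (gamma_is_perm w).
have Eu : u = filter [in u] (gamma w) by apply/subseq_uniqP.
set m := map (fun i => i.+1 \in u) (iota 0 (size w)).
have Hm : size m = size w by rewrite size_map size_iota.
have Eu' : u = filter (fun v => nth false m v.-1) (gamma w).
  rewrite {1}Eu; apply: eq_in_filter => v; rewrite mem_gamma => Hv.
  rewrite /m (nth_map 0) ?size_iota ?nth_iota; last lia.
  rewrite add0n prednK //; first lia.
  lia.
rewrite gamma_mask // in Eu'.
have I1 : isoP (gamma (mask m w)) (gamma y).
  by rewrite Eu' in Hiso; exact: iso_map_inv (h_mono Hm) Hiso.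
set z := mask m w.
have Ez : gamma z = gamma y.
  apply: (@perm_iso_eq _ _ (size y)) => //; last exact: gamma_perm.
  have <- : size z = size y.
    by case: I1; rewrite !size_gamma.
  exact: gamma_perm.
exists (stdz z); split; first exact: std_cayley.
split; first by rewrite -Ez; apply: gamma_iso; exact: std_iso.
exists z; split; first exact: mask_subseq.
by apply/order_isoE; apply: isoP_sym; exact: std_iso.
Qed.

Lemma sorted_iota_rel (r : rel nat) a k :
  (forall j, a <= j -> j.+1 < a + k -> r j j.+1) -> sorted r (iota a k).
Proof.
elim: k a => [|k IH] a H //.
case: k IH H => [|k] IH H //.
rewrite /= ; apply/andP; split; first by apply: H; lia.
have := IH a.+1; rewrite /=; apply=> j Hj1 Hj2; apply: H; lia.
Qed.

Lemma sort_ident w q : perm_eq q (iota 1 (size w)) ->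
  (forall j, j.+1 < size w -> Rw w (nth 0 q j).-1 (nth 0 q j.+1).-1) -> gamma w = q.
Proof.
move=> Hq H; set n := size w.
have Sq : size q = n by rewrite (perm_size Hq) size_iota.
have Hq2 : map (nth 0 q) (iota 0 n) = q by rewrite -Sq; have := mkseq_nth 0 q; rewrite /mkseq.
have Eq : q = map S (map (fun j => (nth 0 q j).-1) (iota 0 n)).
  rewrite -map_comp -{1}Hq2; apply/eq_in_map => j; rewrite mem_iota /= => Hj.
  have : nth 0 q j \in iota 1 n by rewrite -(perm_mem Hq) mem_nth // Sq; lia.
  rewrite mem_iota; lia.
rewrite gammaE [RHS]Eq; congr map.
apply: (sorted_eq (@Rw_trans w) (@Rw_anti w)).
- exact: sort_sorted (@Rw_total w) _.
- rewrite sorted_map; apply: sorted_iota_rel => j _ Hj; exact: H.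
- rewrite perm_sort.
  have E1 : map predn q = map (fun j => (nth 0 q j).-1) (iota 0 n) by rewrite -{1}Hq2 -map_comp.
  have E2 : map predn (iota 1 n) = iota 0 n.
    rewrite (iotaDl 1 0) -map_comp; exact: map_id.
  rewrite -E1 -{1}E2 perm_sym; exact: perm_map.
Qed.

Lemma nth_eta p v : 0 < v <= size p -> nth 0 (eta p) v.-1 = upsilon p (index v p).+1.
Proof.
move=> Hv; rewrite /eta (nth_map 0) ?size_iota ?nth_iota; try lia.
by rewrite add1n prednK //; lia.
Qed.

Lemma gamma_eta p : is_perm p -> gamma (eta p) = p.
Proof.
move=> Hp; have Hpi := is_perm_iota Hp.
have Hu : uniq p by case/andP: Hp.
have Se : size (eta p) = size p by rewrite size_map size_iota.
apply: sort_ident; first by rewrite Se.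
rewrite Se => j Hj.
have Hmem : forall i, i < size p -> 0 < nth 0 p i <= size p.
  move=> i Hi; have : nth 0 p i \in iota 1 (size p) by rewrite -(perm_mem Hpi) mem_nth.
  by rewrite mem_iota; lia.
rewrite /Rw !nth_eta; try (apply: Hmem; lia).
rewrite !index_uniq //; try lia.
have U : upsilon p j.+2 = upsilon p j.+1 + eta_active p j.+1.
  rewrite /upsilon; have -> : iota 1 j.+2.-1 = iota 1 j ++ [:: j.+1] by change (iota 1 j.+1 = iota 1 j ++ [:: j.+1]); have := iotaD 1 j 1; rewrite addn1 add1n; apply.
  by rewrite count_cat /= addn0 addnA.
rewrite U.
case Ha: (eta_active p j.+1) => /=.
  by rewrite addn1 ltnSn.
rewrite addn0 ltnn eqxx /=.
move: Ha; rewrite /eta_active /= Hj andTb => /norP[_].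
have := Hmem j (ltnW Hj); have := Hmem j.+1 Hj; lia.
exact: ltnW.
Qed.

Lemma perm_inv_ok s : is_perm s ->
  perm_eq (perm_inv s) (iota 1 (size s)) /\ gamma (perm_inv s) = s.
Proof.
move=> Hp; have Hs := is_perm_iota Hp.
have Hu : uniq s by case/andP: Hp.
set n := size s.
have Hmem : forall i, i < n -> 0 < nth 0 s i <= n.
  move=> i Hi; have : nth 0 s i \in iota 1 n by rewrite -(perm_mem Hs) mem_nth.
  by rewrite mem_iota; lia.
have Sy : size (perm_inv s) = n by rewrite size_map size_iota.
have Hnth : forall v, 0 < v <= n -> nth 0 (perm_inv s) v.-1 = (index v s).+1.
  move=> v Hv; rewrite /perm_inv (nth_map 0) ?size_iota ?nth_iota; try lia.
  by rewrite add1n prednK //; lia.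
have HP : perm_eq (perm_inv s) (iota 1 n).
  have Uy : uniq (perm_inv s).
    rewrite map_inj_in_uniq ?iota_uniq // => a b Ha Hb /eqP; rewrite eqSS => /eqP E.
    rewrite -(perm_mem Hs) in Ha; rewrite -(perm_mem Hs) in Hb.
    by rewrite -(nth_index 0 Ha) E nth_index.
  have Sub : {subset perm_inv s <= iota 1 n}.
    move=> v /mapP[a Ha ->]; rewrite -(perm_mem Hs) in Ha.
    by rewrite mem_iota; move: Ha; rewrite -index_mem /n => H; apply/andP; split=> //; rewrite add1n ltnS; exact: H.
  have Hsz : size (iota 1 n) <= size (perm_inv s) by rewrite Sy size_iota.
  have [_ Heq] := uniq_min_size Uy Sub Hsz.
  by apply: uniq_perm => //; exact: iota_uniq.
split=> //.
apply: sort_ident; first by rewrite Sy.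
rewrite Sy => j Hj.
rewrite /Rw !Hnth; try (apply: Hmem; lia).
rewrite !index_uniq //; try lia. exact: ltnW.
Qed.

Lemma part2 y p : gamma_img (Xbr y) p <-> Sav (gamma y) p.
Proof.
split.
  case=> w [[Hx Hav] <-]; split; first exact: gamma_is_perm.
  move=> Hc; have [x [Hxc [Hxg Hxw]]] := gamma_contains Hc.
  exact: Hav x Hxc Hxg Hxw.
case=> Hp Hav; exists (eta p); split; last exact: gamma_eta.
split; first by exists p.
move=> x Hx Hg Hc; apply: Hav.
by have := contains_gamma Hc; rewrite gamma_eta // Hg.
Qed.

Theorem theorem7p2 :
  (forall sigma : seq nat, is_perm sigma ->
     forall p : seq nat, Sav sigma p <-> gamma_img (Xbr (perm_inv sigma)) p) /\
  (forall y : seq nat, is_cayley y ->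
     forall p : seq nat, gamma_img (Xbr y) p <-> Sav (gamma y) p).
Proof.
split; last by move=> y _ p; exact: part2.
move=> sigma Hs p; have [_ Hg] := perm_inv_ok Hs.
have := part2 (perm_inv sigma) p; rewrite Hg; by case=> H1 H2; split.
Qed.
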